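(* Let $p_1,\dots,p_s$ be distinct primes and $m_1,\dots,m_s\ge1$. Let $R$ be a multi-sorted relation on variables $x_{1,1},\dots,x_{1,k_1},\dots,x_{s,1},\dots,x_{s,k_s}$, where $x_{i,j}$ has domain $\mathbb Z_{p_i^{m_i}}$, and suppose $R$ is invariant under the affine operation $x-y+z$ (computed in each $\mathbb Z_{p_i^{m_i}}$). Then $$R(x_{1,1},\dots,x_{s,k_s})=(\mathrm{pr}_{(1,1),\dots,(1,k_1)}R)(x_{1,1},\dots,x_{1,k_1})\times\dots\times(\mathrm{pr}_{(s,1),\dots,(s,k_s)}R)(x_{s,1},\dots,x_{s,k_s}).$$
   Context: For a relation $R$ and a set $I$ of coordinates, $\mathrm{pr}_IR=\{\mathrm{pr}_I\mathbf a:\mathbf a\in R\}$ where $\mathrm{pr}_I\mathbf a$ is the restriction of $\mathbf a$ to the coordinates in $I$. The product $R_1(x_1,\dots,x_r)\times R_2(y_1,\dots,y_t)$ is the relation of all $(x_1,\dots,x_r,y_1,\dots,y_t)$ with $(x_1,\dots,x_r)\in R_1$ and $(y_1,\dots,y_t)\in R_2$. $R$ invariant under the affine operation means: for all $\mathbf a,\mathbf b,\mathbf c\in R$, the coordinatewise tuple $\mathbf a-\mathbf b+\mathbf c$ lies in $R$. *)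

(* Defs.v *)
From HB Require Import structures.
From mathcomp Require Import all_boot all_order all_algebra.
Set Implicit Arguments. Unset Strict Implicit. Unset Printing Implicit Defensive.
Import GRing.Theory.
Local Open Scope ring_scope.

(* A tuple of the multi-sorted relation: for each sort i : 'I_s, a block of
   k i values in 'Z_(p i ^ m i). *)
Notation mtuple p m k :=
  {dffun forall i, {ffun 'I_(k i) -> 'Z_(p i ^ m i)}}.

Definition affine_op (s : nat) (p m k : 'I_s -> nat)
  (a b c : mtuple p m k) : mtuple p m k :=
  [ffun i => [ffun j => a i j - b i j + c i j]].

Definition affine_invariant (s : nat) (p m k : 'I_s -> nat)
  (R : {set mtuple p m k}) : Prop :=
  forall a b c, a \in R -> b \in R -> c \in R -> affine_op a b c \in R.

Definition pr_block (s : nat) (p m k : 'I_s -> nat)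
  (R : {set mtuple p m k}) (i : 'I_s) : {set {ffun 'I_(k i) -> 'Z_(p i ^ m i)}} :=
  [set b | [exists a : mtuple p m k, (a \in R) && (a i == b)]].

Definition prod_blocks (s : nat) (p m k : 'I_s -> nat)
  (R : {set mtuple p m k}) : {set mtuple p m k} :=
  [set a : mtuple p m k | [forall i : 'I_s, a i \in pr_block R i]].

(* Main.v *)
Require Import Defs.
From mathcomp Require Import all_boot all_order all_algebra.
Set Implicit Arguments. Unset Strict Implicit. Unset Printing Implicit Defensive.
Import GRing.Theory.
Local Open Scope ring_scope.

Section Aux.
Variables (s : nat) (p m k : 'I_s -> nat).
Hypothesis pP : forall i, prime (p i).
Hypothesis pI : injective p.
Hypothesis mP : forall i, (1 <= m i)%N.

Lemma N_gt1 i : (1 < p i ^ m i)%N.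
Proof.
have := prime_gt1 (pP i); have := mP i.
case: (m i) => // n _ H; rewrite expnS.
by apply: (leq_trans H); rewrite leq_pmulr // expn_gt0 ltnW.
Qed.

Lemma mulrn_mod i (v : 'Z_(p i ^ m i)) n :
  v *+ n = v *+ (n %% (p i ^ m i)).
Proof.
by rewrite -[v *+ n]mulr_natr -[v *+ (n %% _)]mulr_natr Zp_nat_mod // N_gt1.
Qed.

Lemma iter_aff (x y : mtuple p m k) n i j :
  iter n (fun z => affine_op x y z) y i j = y i j + (x i j - y i j) *+ n.
Proof.
elim: n => [|n IH] /=; first by rewrite mulr0n addr0.
by rewrite /affine_op !ffunE IH mulrSr addrC -addrA.
Qed.

Lemma key (R : {set mtuple p m k}) :
  affine_invariant R -> forall x y i, x \in R -> y \in R ->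
  exists2 z, z \in R & (z i = x i /\ forall l, l != i -> z l = y l).
Proof.
move=> aR x y i xR yR.
pose N l := (p l ^ m l)%N.
pose M := (\prod_(l | l != i) N l)%N.
have co : coprime (N i) M.
  apply: (big_ind (fun a => coprime (N i) a)) => //.
  - by rewrite /coprime gcdn1.
  - by move=> a b Ha Hb; rewrite coprimeMr Ha Hb.
  move=> l li; rewrite /N coprime_pexpl ?mP // coprime_pexpr ?mP //.
  rewrite prime_coprime // dvdn_prime2 //.
  by apply/negP => /eqP /pI E; move: li; rewrite E eqxx.
pose n := chinese (N i) M 1%N 0%N.
have Hi : (n %% N i = 1)%N.
  by rewrite /n chinese_modl // modn_small // N_gt1.
have Hl l : l != i -> (n %% N l = 0)%N.
  move=> li.
  have dv : (N l %| M)%N by rewrite /M (bigD1 l) //= dvdn_mulr.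
  by rewrite -(modn_dvdm n dv) /n (chinese_modr co) !mod0n.
exists (iter n (fun z => affine_op x y z) y).
  elim: n {Hi Hl} => [|n' IH] //=; exact: aR.
split.
  apply/ffunP => j; rewrite iter_aff mulrn_mod.
  by rewrite -/(N i) Hi mulr1n addrC subrK.
move=> l li; apply/ffunP => j; rewrite iter_aff mulrn_mod.
by rewrite -/(N l) Hl // mulr0n addr0.
Qed.
End Aux.

Theorem lemma4p4 (s : nat) (p m k : 'I_s -> nat) (R : {set mtuple p m k}) :
  (0 < s)%N ->
  (forall i, prime (p i)) ->
  injective p ->
  (forall i, (1 <= m i)%N) ->
  affine_invariant R ->
  R = prod_blocks R.
Proof.
move=> s0 pP pI mP aR.
apply/setP => a; rewrite inE; apply/idP/idP.
  move=> aR'; apply/forallP => i; rewrite inE.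
  by apply/existsP; exists a; rewrite aR' eqxx.
move/forallP => H.
have W i : exists2 b, b \in R & b i = a i.
  by move: (H i); rewrite inE => /existsP [b /andP [bR /eqP E]]; exists b.
have [r rR _] := W (Ordinal s0).
suff: forall t, (t <= s)%N -> exists2 z, z \in R & forall l : 'I_s, (l < t)%N -> z l = a l.
  move=> /(_ s (leqnn s)) [z zR Hz].
  suff -> : a = z by [].
  by apply/ffunP => l; rewrite Hz.
elim => [|t IH] ts; first by exists r.
have [z zR Hz] := IH (ltnW ts).
have [b bR Eb] := W (Ordinal ts).
have [z' z'R [E1 E2]] := key pP pI mP aR (Ordinal ts) bR zR.
exists z' => // l; rewrite ltnS leq_eqVlt => /orP [/eqP lt|lt].
  have -> : l = Ordinal ts by apply: val_inj.
  by rewrite E1 Eb.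
rewrite E2 ?Hz //.
by apply/eqP => /(congr1 val) /= E; move: lt; rewrite E ltnn.
Qed.
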